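(* Let $N\ge1$ and let $\mu^\star_0$ be any absolutely continuous probability measure on $\mathbb{R}^d$ with finite second moment. Then there exist absolutely continuous data $(\mu^\star_{i/N})_{i=1}^N$ and an optimal solution $(Y_t)$ of the P-spline problem for $(\mu^\star_{i/N})_{i=0}^N$ such that $Y_1$ is not a deterministic function of $Y_0$.
   Context: The P-spline problem with data $\mu^\star_{t_0},\dots,\mu^\star_{t_N}$ at times $0=t_0<\dots<t_N=1$ is $\inf_{(Y_t)}\int_0^1\mathbb E[\|\ddot Y_t\|^2]\,dt$ over stochastic processes $(Y_t)_{t\in[0,1]}$ in $\mathbb{R}^d$ with twice differentiable paths and $Y_{t_i}\sim\mu^\star_{t_i}$ for all $i$. Here $t_i=i/N$. *)

(* Defs.v *)
(* R^d is modelled as d.-tuple R, which carries the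
   product (= Borel) sigma-algebra of mathcomp-analysis. *)
From HB Require Import structures.
From mathcomp Require Import all_boot all_order all_algebra.
From mathcomp Require Import all_classical all_reals all_analysis.
Set Implicit Arguments. Unset Strict Implicit. Unset Printing Implicit Defensive.
Import Order.TTheory GRing.Theory Num.Theory.
Import numFieldNormedType.Exports.
Local Open Scope classical_set_scope.
Local Open Scope ring_scope.

Section PSpline.
Context {R : realType} (d : nat).

Definition sqnorm (x : d.-tuple R) : R := \sum_(i < d) tnth x i ^+ 2.

Definition box (a b : d.-tuple R) : set (d.-tuple R) :=
  [set x | forall i, tnth a i <= tnth x i <= tnth b i].
Definition box_vol (a b : d.-tuple R) : R := \prod_(i < d) (tnth b i - tnth a i).

Definition lebesgue_null (A : set (d.-tuple R)) : Prop :=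
  forall eps : R, 0 < eps -> exists a b : nat -> d.-tuple R,
    (forall k i, tnth (a k) i <= tnth (b k) i) /\
    A `<=` \bigcup_k box (a k) (b k) /\
    (\sum_(0 <= k <oo) (box_vol (a k) (b k))%:E <= eps%:E)%E.

Definition abs_cont (mu : probability (d.-tuple R) R) : Prop :=
  forall A, measurable A -> lebesgue_null A -> mu A = 0%E.

Definition finite_second_moment (mu : probability (d.-tuple R) R) : Prop :=
  (\int[mu]_x (sqnorm x)%:E < +oo)%E.

Definition coord_path {T : Type} (Y : R -> T -> d.-tuple R) (w : T) (i : 'I_d)
  : R -> R := fun s => tnth (Y s w) i.

Definition accel {T : Type} (Y : R -> T -> d.-tuple R) (w : T) (t : R)
  : d.-tuple R := [tuple derive1 (derive1 (coord_path Y w i)) t | i < d].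

Definition admissible {dO : measure_display} {O : measurableType dO}
  (P : probability O R) (N : nat) (mu : nat -> probability (d.-tuple R) R)
  (Y : R -> O -> d.-tuple R) : Prop :=
  [/\ forall t, measurable_fun setT (Y t),
      forall w i t, derivable (coord_path Y w i) t 1 /\
                    derivable (derive1 (coord_path Y w i)) t 1 &
      forall k : nat, (k <= N)%N -> forall A, measurable A ->
        P (Y (k%:R / N%:R) @^-1` A) = mu k A].

Definition spline_cost {dO : measure_display} {O : measurableType dO}
  (P : probability O R) (Y : R -> O -> d.-tuple R) : \bar R :=
  (\int[lebesgue_measure]_(t in `[0%R, 1%R]) \int[P]_w (sqnorm (accel Y w t))%:E)%E.

Definition optimal_solution {dO : measure_display} {O : measurableType dO}
  (P : probability O R) (N : nat) (mu : nat -> probability (d.-tuple R) R)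
  (Y : R -> O -> d.-tuple R) : Prop :=
  admissible P N mu Y /\
  forall (dO' : measure_display) (O' : measurableType dO')
         (P' : probability O' R) (Y' : R -> O' -> d.-tuple R),
    admissible P' N mu Y' -> (spline_cost P Y <= spline_cost P' Y')%E.

End PSpline.

(* Main.v *)
Require Import Defs.
From HB Require Import structures.
From mathcomp Require Import all_boot all_order all_algebra.
From mathcomp Require Import all_classical all_reals all_analysis.
From mathcomp Require Import ring lra.
Import Order.TTheory GRing.Theory Num.Theory.
Import numFieldNormedType.Exports.
Local Open Scope classical_set_scope.
Local Open Scope ring_scope.
Section Lin.
Context (R : realType).
Lemma lin_isd (a c t : R) : is_derive t 1 (fun s : R => a + s * c) c.
Proof.
apply: is_derive_eq. by rewrite add0r mul1r scaler0 add0r; exact: mulr1.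
Qed.
Lemma lin_der (a c t : R) : derive1 (fun s : R => a + s * c) t = c.
Proof. have H := lin_isd a c t. rewrite derive1E. apply: derive_val. Qed.
Lemma lin_dvb (a c t : R) : derivable (fun s : R => a + s * c) t 1.
Proof. by have [] := lin_isd a c t. Qed.
Lemma lin_der2 (a c t : R) : derive1 (derive1 (fun s : R => a + s * c)) t = 0.
Proof. have -> : derive1 (fun s : R => a + s * c) = cst c by apply/funext=> s; apply: lin_der.
by rewrite derive1E derive_val. Qed.
Lemma lin_dvb2 (a c t : R) : derivable (derive1 (fun s : R => a + s * c)) t 1.
Proof. have -> : derive1 (fun s : R => a + s * c) = cst c by apply/funext=> s; apply: lin_der.
by []. Qed.
End Lin.
Section S.
Context (R : realType) (d : nat) (mu0 : probability (d.-tuple R) R).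
Definition emb (b : bool) (x : d.-tuple R) : d.-tuple R * bool := (x, b).
Lemma emb_meas b : measurable_fun setT (emb b).
Proof. exact: measurable_fun_pair. Qed.
HB.instance Definition _ b := isMeasurableFun.Build _ _ _ _ (emb b) (emb_meas b).
Definition half : {nonneg R} := (2^-1)%:nng.
Definition Pmix := mscale half (measure_add (distribution mu0 (emb false)) (distribution mu0 (emb true))).
HB.instance Definition _ := Measure.on Pmix.
Lemma PmixE A : Pmix A = ((2^-1)%:E * (mu0 (emb false @^-1` A) + mu0 (emb true @^-1` A)))%E.
Proof. rewrite /Pmix /mscale. congr (_ * _)%E. exact: measure_addE. Qed.
Lemma Pmix_setT : Pmix setT = 1%:E.
Proof. rewrite PmixE !preimage_setT !probability_setT -EFinD -EFinM. congr EFin. by field. Qed.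
HB.instance Definition _ := Measure_isProbability.Build _ _ _ Pmix Pmix_setT.
Definition Yf (t : R) (w : d.-tuple R * bool) : d.-tuple R :=
  [tuple tnth w.1 i + t * (w.2)%:R | i < d].
Lemma Yf_meas t : measurable_fun setT (Yf t).
Proof.
apply/measurable_fun_tnthP => i.
have -> : (@tnth d R ^~ i \o Yf t) = (fun w => tnth w.1 i + t * (w.2)%:R).
  by apply/funext => w /=; rewrite tnth_mktuple.
apply: measurable_realfun.measurable_funD.
  exact: measurableT_comp (measurable_tnth i) measurable_fst.
apply: (measurableT_comp (f := fun b : bool => t * b%:R)) measurable_snd.
by move=> _ B _.
Qed.
HB.instance Definition _ t := isMeasurableFun.Build _ _ _ _ (Yf t) (Yf_meas t).
Lemma Yf0 x b : Yf 0 (x, b) = x.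
Proof. by apply: eq_from_tnth => i; rewrite tnth_mktuple mul0r addr0. Qed.
Lemma Yf_false t x : Yf t (x, false) = x.
Proof. by apply: eq_from_tnth => i; rewrite tnth_mktuple mulr0 addr0. Qed.
Lemma coord_Yf w i : coord_path Yf w i = (fun s => tnth w.1 i + s * (w.2)%:R).
Proof. by apply/funext => s; rewrite /coord_path tnth_mktuple. Qed.
Lemma shift_null t (A : set (d.-tuple R)) :
  lebesgue_null A -> lebesgue_null ((fun x => Yf t (x, true)) @^-1` A).
Proof.
move=> hA eps eps0; have [a [b [hab [cov vol]]]] := hA eps eps0.
exists (fun k => [tuple tnth (a k) i - t | i < d]), (fun k => [tuple tnth (b k) i - t | i < d]).
split; [|split].
- by move=> k i; rewrite !tnth_mktuple lerD2r.
- move=> x /= /cov [k _ hk]; exists k => // i.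
  have := hk i; rewrite !tnth_mktuple mulr1 => /andP[h1 h2].
  by apply/andP; split; [rewrite lerBlDr | rewrite lerBrDr].
- apply: le_trans vol; rewrite le_eqVlt; apply/orP; left; apply/eqP.
  apply: eq_eseriesr => k _; congr EFin; apply: eq_bigr => i _.
  by rewrite !tnth_mktuple opprB addrA subrK.
Qed.

End S.
Arguments Pmix {R d}.
Arguments PmixE {R d}.
Arguments Yf {R d}.
Arguments emb {R d}.
Arguments Yf_meas {R d}.
Arguments emb_meas {R d}.
Arguments Yf0 {R d}.
Arguments Yf_false {R d}.
Arguments coord_Yf {R d}.
Arguments shift_null {R d}.

Lemma half_double (R : realType) (x : \bar R) : x \is a fin_num ->
  ((2^-1)%:E * (x + x))%E = x.
Proof. move=> fx; rewrite -(fineK fx) -EFinD -EFinM; congr EFin; by field. Qed.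

Lemma prob_fin (R : realType) dT (T : measurableType dT) (P : probability T R) A :
  measurable A -> P A \is a fin_num.
Proof.
move=> mA; rewrite ge0_fin_numE; last exact: measure_ge0.
exact: (le_lt_trans (probability_le1 P mA) (ltry 1)).
Qed.

Theorem proposition5 (R : realType) (d N : nat) (hd : (0 < d)%N) (hN : (0 < N)%N)
  (mu0 : probability (d.-tuple R) R) :
  abs_cont mu0 -> finite_second_moment mu0 ->
  exists mu : nat -> probability (d.-tuple R) R,
    mu 0%N = mu0 /\
    (forall k, (1 <= k <= N)%N -> abs_cont (mu k)) /\
    exists (dO : measure_display) (O : measurableType dO)
           (P : probability O R) (Y : R -> O -> d.-tuple R),
      optimal_solution P N mu Y /\
      ~ exists g : d.-tuple R -> d.-tuple R,
          measurable_fun setT g /\ {ae P, forall w, Y 1 w = g (Y 0 w)}.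
Proof.
move=> hac _.
pose P := Pmix mu0.
pose mu := fun k : nat => if k is 0%N then mu0 else
  (distribution P (Yf (k%:R / N%:R)) : probability _ R).
exists mu; split; first by [].
split.
  case=> // k _ A mA nA /=.
  rewrite /distribution /pushforward PmixE.
  set t := (k.+1%:R / N%:R).
  have -> : emb false @^-1` (Yf t @^-1` A) = A.
    by apply/funext => x; rewrite /preimage /emb /= Yf_false.
  rewrite (hac A mA nA).
  have mf : measurable_fun setT (@Yf R d t \o @emb R d true).
    exact: measurableT_comp (Yf_meas t) (emb_meas true).
  have mB : measurable ((@Yf R d t \o @emb R d true) @^-1` A).
    by have := mf measurableT A mA; rewrite setTI.
  rewrite (hac _ mB (shift_null t A nA)).
  by rewrite adde0 mule0.
exists _, _, P, Yf; split.
  split.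
    split.
    - exact: Yf_meas.
    - by move=> w i t; rewrite coord_Yf; split; [exact: lin_dvb | exact: lin_dvb2].
    - case=> [_ A mA | k _ A mA]; last by [].
      rewrite /= PmixE.
      have -> : (0%:R / N%:R : R) = 0 by rewrite mul0r.
      have E : forall b, emb b @^-1` (Yf 0 @^-1` A) = A.
        by move=> b; apply/funext => x; rewrite /preimage /emb /= Yf0.
      by rewrite !E half_double // prob_fin.
  move=> dO' O' P' Y' _.
  have -> : spline_cost P Yf = 0%E.
    rewrite /spline_cost.
    transitivity (\int[@lebesgue_measure R]_(t in `[0%R, 1%R]) cst 0 t)%E; last exact: integral0.
    apply: eq_integral => t _.
    transitivity (\int[P]_w cst 0 w)%E; last exact: integral0.
    apply: eq_integral => w _.
    rewrite /sqnorm big1 // => i _.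
    by rewrite tnth_mktuple coord_Yf lin_der2 expr0n.
  apply: integral_ge0 => t _; apply: integral_ge0 => w _.
  by rewrite lee_fin; apply: sumr_ge0 => i _; exact: sqr_ge0.
move=> [g [_ hae]].
have [Ns [mN PN sub]] := hae.

have PN2 : Pmix mu0 Ns = 0%E := PN.
move: PN2; rewrite PmixE => /eqP; rewrite mule_eq0 eqe invr_eq0 pnatr_eq0 /=.
have mE : forall b, measurable (emb b @^-1` Ns).
  by move=> b; have := emb_meas b measurableT Ns mN; rewrite setTI.
rewrite padde_eq0 ?measure_ge0 // => /andP[/eqP h0 /eqP h1].
have cov : [set: d.-tuple R] `<=` (emb false @^-1` Ns) `|` (emb true @^-1` Ns).
  move=> x _; have [gx|gx] := eqVneq (g x) x.
  - right; apply: sub => /=; rewrite Yf0 gx => /(congr1 (fun y => tnth y (Ordinal hd))).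
    by rewrite tnth_mktuple /= mulr1 => /eqP; rewrite -subr_eq0 addrAC subrr add0r oner_eq0.
  - left; apply: sub => /=; rewrite Yf0 Yf_false => hx.
    by move/eqP: gx; apply; rewrite -hx.
have T1 : mu0 [set: d.-tuple R] = 1%E by exact: probability_setT.
have H : (mu0 [set: d.-tuple R] <= mu0 ((emb false @^-1` Ns) `|` (emb true @^-1` Ns)))%E.
  exact: le_measure (mem_set measurableT) (mem_set (measurableU _ _ (mE false) (mE true))) cov.
rewrite T1 in H.
have h0' : mu0 (emb false @^-1` Ns) = 0%E := h0.
have h1' : mu0 (emb true @^-1` Ns) = 0%E := h1.
have H2 : (mu0 ((emb false @^-1` Ns) `|` (emb true @^-1` Ns)) <= mu0 (emb false @^-1` Ns) + mu0 (emb true @^-1` Ns))%E.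
  exact: measureU2.
rewrite h0' h1' adde0 in H2.
by have := le_trans H H2; rewrite lee_fin ler10.
Qed.
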